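(* Let $R$ be a commutative ring, $n$ a positive integer, and $x_1,\dots,x_{n+1}\in J(R)$. Then the ideal $x_1\cdots x_{n+1}R$ is a weakly $n$-absorbing ideal of $R$ if and only if $x_1\cdots x_{n+1}=0$.
   Context: All rings are commutative with $1\neq0$. $J(R)$ denotes the intersection of all maximal ideals of $R$. A proper ideal $I$ of $R$ is weakly $n$-absorbing if whenever $0\neq a_1\cdots a_{n+1}\in I$ with $a_1,\dots,a_{n+1}\in R$, there are $n$ of the $a_i$'s whose product is in $I$. *)

(* Defs.v *)
From mathcomp Require Import all_boot all_order all_algebra.
Set Implicit Arguments. Unset Strict Implicit. Unset Printing Implicit Defensive.
Import GRing.Theory.
Local Open Scope ring_scope.

Definition is_ideal (R : comNzRingType) (I : R -> Prop) : Prop :=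
  [/\ I 0,
      (forall x y, I x -> I y -> I (x + y)),
      (forall x, I x -> I (- x)) &
      (forall r x, I x -> I (r * x))].

Definition proper_ideal (R : comNzRingType) (I : R -> Prop) : Prop :=
  is_ideal I /\ ~ I 1.

Definition maximal_ideal (R : comNzRingType) (M : R -> Prop) : Prop :=
  proper_ideal M /\
  forall N : R -> Prop, is_ideal N -> (forall x, M x -> N x) ->
    (forall x, N x <-> M x) \/ N 1.

Definition jacobson (R : comNzRingType) (x : R) : Prop :=
  forall M : R -> Prop, maximal_ideal M -> M x.

Definition principal_ideal (R : comNzRingType) (a : R) : R -> Prop :=
  fun y => exists r : R, y = a * r.

Definition weakly_n_absorbing (R : comNzRingType) (n : nat) (I : R -> Prop) : Prop :=
  proper_ideal I /\
  forall a : 'I_n.+1 -> R,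
    \prod_(i < n.+1) a i != 0 -> I (\prod_(i < n.+1) a i) ->
    exists j : 'I_n.+1, I (\prod_(i < n.+1 | i != j) a i).

(* Main.v *)
Require Import Defs.
From mathcomp Require Import all_boot all_order all_algebra.
From mathcomp Require Import boolp classical_sets.
Import GRing.Theory.
Local Open Scope ring_scope.

Section Aux.
Variable R : comNzRingType.

Definition idl_in (u : R) := {I : R -> Prop | is_ideal I /\ ~ I 1 /\ I u}.

Lemma exists_max (u : R) : ~ (exists r, 1 = u * r) ->
  exists M, maximal_ideal M /\ M u.
Proof.
move=> nu.
pose Rl (s t : idl_in u) : bool := `[< forall z, proj1_sig s z -> proj1_sig t z >].
have [M HM] : exists M : idl_in u, forall N, Rl M N -> N = M.
  apply: (@Zorn _ Rl).
  - by move=> t; apply/asboolP.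
  - by move=> r s t /asboolP H1 /asboolP H2; apply/asboolP => z /H1/H2.
  - move=> [I HI] [J HJ] /asboolP /= H1 /asboolP /= H2.
    have EIJ : I = J by apply: funext => z; apply: propext; split; [apply: H1|apply: H2].
    subst J; congr exist; exact: Prop_irrelevance.
  - move=> A Atot.
    have [[s As]|nA] := pselect (exists s, A s); last first.
      have Hu : is_ideal (fun z => exists r, z = u * r) /\
          ~ (exists r, 1 = u * r) /\ (exists r, u = u * r).
        split; last by split=> //; exists 1; rewrite mulr1.
        split.
        + by exists 0; rewrite mulr0.
        + by move=> a b [r1 ->] [r2 ->]; exists (r1 + r2); rewrite mulrDr.
        + by move=> a [r1 ->]; exists (- r1); rewrite mulrN.
        + by move=> r a [r1 ->]; exists (r * r1); rewrite mulrCA.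
      by exists (exist (fun I : R -> Prop => is_ideal I /\ ~ I 1 /\ I u) _ Hu) => t At; exfalso; apply: nA; exists t.
    pose U z := exists t, A t /\ proj1_sig t z.
    have HU : is_ideal U /\ ~ U 1 /\ U u.
      split; last split.
      + split.
        * by exists s; split=> //; case: s As => I [[]].
        * move=> a b [t1 [At1 H1]] [t2 [At2 H2]].
          have [/asboolP L|/asboolP L] := Atot _ _ At1 At2.
          - exists t2; split=> //; case: t2 At2 H2 L => I [[_ hD _ _] _] /= _ H2 L.
            by apply: hD => //; apply: L.
          - exists t1; split=> //; case: t1 At1 H1 L => I [[_ hD _ _] _] /= _ H1 L.
            by apply: hD => //; apply: L.
        * move=> a [t [At H]]; exists t; split=> //.
          by case: t At H => I [[_ _ hN _] _] /= _ H; apply: hN.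
        * move=> r a [t [At H]]; exists t; split=> //.
          by case: t At H => I [[_ _ _ hM] _] /= _ H; apply: hM.
      + by move=> [[I [_ [h1 _]]] [_ /= H]]; exact: h1 H.
      + by exists s; split=> //; exact: (proj2 (proj2 (proj2_sig s))).
    exists (exist (fun I : R -> Prop => is_ideal I /\ ~ I 1 /\ I u) _ HU) => t At; apply/asboolP => z H /=.
    by exists t.
exists (proj1_sig M); split; last exact: (proj2 (proj2 (proj2_sig M))).
split; first exact: (conj (proj1 (proj2_sig M)) (proj1 (proj2 (proj2_sig M)))).
move=> N HN MN.
have [N1|N1] := pselect (N 1); first by right.
left.
have Nu : N u by apply: MN; exact: (proj2 (proj2 (proj2_sig M))).
have := HM (exist (fun I : R -> Prop => is_ideal I /\ ~ I 1 /\ I u) _ (conj HN (conj N1 Nu))).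
move=> /(_ _) E.
have E' := E (asboolT MN).
by rewrite -E' /=.
Qed.
End Aux.

Theorem mainTheorem18 (R : comNzRingType) (n : nat) (hn : (0 < n)%N)
  (x : 'I_n.+1 -> R) (hx : forall i, jacobson (x i)) :
  weakly_n_absorbing n (principal_ideal (\prod_(i < n.+1) x i))
  <-> \prod_(i < n.+1) x i = 0.
Proof.
set P := \prod_(i < n.+1) x i.
split; last first.
  move=> P0; split.
    split; first split.
    - by exists 0; rewrite mulr0.
    - by move=> a b [r1 ->] [r2 ->]; exists (r1 + r2); rewrite mulrDr.
    - by move=> a [r1 ->]; exists (- r1); rewrite mulrN.
    - by move=> r a [r1 ->]; exists (r * r1); rewrite mulrCA.
    by move=> [r]; rewrite P0 mul0r => /eqP; rewrite oner_eq0.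
  move=> a na [r]; rewrite P0 mul0r => E; by rewrite E eqxx in na.
move=> [_ H].
apply/eqP; apply/negPn/negP => P0.
have [j [r Hj]] := H x P0 (ex_intro _ 1 (esym (mulr1 _))).
set y := \prod_(i < n.+1 | i != j) x i in Hj.
have PE : P = x j * y by rewrite /P (bigD1 j).
have Hy : y * (1 - x j * r) = 0.
  by rewrite mulrBr mulr1 mulrA [y * _]mulrC -PE -Hj subrr.
have [[v Hv]|nu] := pselect (exists v, 1 = (1 - x j * r) * v).
  have y0 : y = 0 by rewrite -[y]mulr1 Hv mulrA Hy mul0r.
  by move: P0; rewrite PE y0 mulr0 eqxx.
have [M [HM Mu]] := @exists_max R _ nu.
have Mx := hx j M HM.
case: HM => [[[_ hD _ hM] n1] _]; apply: n1.
have := hD _ _ Mu (hM r _ Mx).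
by rewrite [r * _]mulrC subrK.
Qed.
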